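(* For $i\in\{1,2\}$ let $(\mathcal B_{i,\mathbb R},\mathcal S_i,e_i,m_i)$ be as in the context, with the same constant $\kappa$. Let $\mathcal L\in L(\mathcal B_{1,\mathbb R},\mathcal B_{2,\mathbb R})$ and $\mathcal L_{\mathbb C}\in L(\mathcal B_{1,\mathbb C},\mathcal B_{2,\mathbb C})$. Assume $\mathcal L(\mathcal C_{1,\mathbb R})\subset\mathcal C_{2,\mathbb R}$ and $\Delta_{\mathbb R}:=\operatorname{diam}_{d_H}(\mathcal L(\mathcal C_{1,\mathbb R}))<\infty$. If there exists $\varepsilon\in\big(0,\frac{\kappa^2}{12\sqrt2}e^{-2\Delta_{\mathbb R}}\big)$ such that for all $\ell\in\mathcal S_2$ and all $h\in\mathcal C_{1,\mathbb R}$, \[|\ell(\mathcal L_{\mathbb C}h)-\ell(\mathcal Lh)|\le\varepsilon\,\ell(\mathcal Lh),\] then $\mathcal L_{\mathbb C}(\mathcal C_{1,\mathbb C})\subset\mathcal C_{2,\mathbb C}$ and \[\operatorname{diam}_{\delta_{\mathcal C_{2,\mathbb C}}}(\mathcal L_{\mathbb C}(\mathcal C_{1,\mathbb C}))\le8\Delta_{\mathbb R}+2\ln[3\sqrt2\kappa^{-2}]+\tfrac{\sqrt2}{3}\kappa^2e^{-2\Delta_{\mathbb R}}.\]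
   Context: Cone setting. $V$ is a real topological vector space, $\mathcal S\subset V'$ a set of linear functionals such that $\ell(x)=0$ for all $\ell\in\mathcal S$ implies $x=0$, and $C_{\mathbb R}=\{h\in V\setminus\{0\}:\ell(h)\ge0\ \forall\ell\in\mathcal S\}$. There is $e\in C_{\mathbb R}$ such that for every $h\in V$ some $\lambda\ge0$ has $\lambda e-h\in C_{\mathbb R}$. The norm is $\|h\|=\inf\{\lambda\ge0:\ell(\lambda e\pm h)\ge0\ \forall\ell\in\mathcal S\}$ and $\mathcal B_{\mathbb R}$ is the completion of $V$; $\mathcal C_{\mathbb R}=\{h\in\mathcal B_{\mathbb R}\setminus\{0\}:\ell(h)\ge0\ \forall\ell\in\mathcal S\}$. $\mathcal S_*$ is the weak-$*$ closure of the convex hull of $\{\lambda\ell:\lambda>0,\ell\in\mathcal S\}$, and there exist $m\in\mathcal S_*$ and $\kappa\in(0,1)$ with $m(e)=1$ and $m(h)\ge\kappa\|h\|$ for all $h\in\mathcal C_{\mathbb R}$. $\mathcal C'_{\mathbb R}=\{\ell\in\mathcal B'_{\mathbb R}:\ell(h)\ge0\ \forall h\in\mathcal C_{\mathbb R}\}$. The Hilbert metric on $\mathcal C_{\mathbb R}$ is $d_H(h,g)=\ln(\beta/\alpha)$, $\alpha=\sup\{\lambda>0:g-\lambda h\in\mathcal C_{\mathbb R}\}$, $\beta=\inf\{\mu>0:\mu h-g\in\mathcal C_{\mathbb R}\}$. $\mathcal B_{\mathbb C}$ is the complexification (elements $x+iy$, $x,y\in\mathcal B_{\mathbb R}$, norm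 $\|x+iy\|=\sup_\theta(\|\Re(e^{i\theta}(x+iy))\|^2+\|\Im(e^{i\theta}(x+iy))\|^2)^{1/2}$), real functionals extended complex-linearly. Complex cone $\mathcal C_{\mathbb C}=\{z(x+iy):z\in\mathbb C\setminus\{0\},x,y\in\mathcal C_{\mathbb R}\}$; dual cone $\mathcal C'_{\mathbb C}=\{\ell\in\mathcal B'_{\mathbb C}:\ell(h)\ne0\ \forall h\in\mathcal C_{\mathbb C}\}$. For $h,g\in\mathcal C_{\mathbb C}$, $E(h,g)=\{\ell(h)/\ell(g):\ell\in\mathcal C'_{\mathbb C}\}$ and $\delta_{\mathcal C}(h,g)=\ln\frac{\sup_{z\in E(h,g)}|z|}{\inf_{z\in E(h,g)}|z|}$; diameters are taken with respect to $\delta_{\mathcal C}$. Objects of the $i$-th space carry index $i$. *)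

(* Defs.v *)
From HB Require Import structures.
From mathcomp Require Import all_boot all_order all_algebra.
From mathcomp Require Import all_classical all_reals all_analysis.
From mathcomp Require Import complex.
Import Order.TTheory GRing.Theory Num.Theory.

Set Implicit Arguments.
Unset Strict Implicit.
Unset Printing Implicit Defensive.

Local Open Scope ring_scope.
Local Open Scope classical_set_scope.

Section ConeDefs.
Variable R : realType.

Section Real.
Variable B : completeNormedModType R.

Definition is_rfunctional (l : B -> R) : Prop :=
  (forall (a : R) (x y : B), l (a *: x + y) = a * l x + l y) /\
  continuous (l : B -> R^o).

Definition rcone (S : set (B -> R)) : set B :=
  [set h | h != 0 /\ forall l, S l -> 0 <= l h].

Definition pos_hull (S : set (B -> R)) : set (B -> R) :=
  [set f | exists (n : nat) (t lam : 'I_n -> R) (ls : 'I_n -> (B -> R)),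
      (forall j, 0 <= t j) /\ \sum_(j < n) t j = 1 /\
      (forall j, 0 < lam j) /\ (forall j, S (ls j)) /\
      f = (fun x => \sum_(j < n) t j * (lam j * ls j x))].

(* S_* : weak-* closure (in B') of pos_hull S; basic weak-* neighbourhoods
   are given by a finite list of points and a radius *)
Definition Sstar (S : set (B -> R)) : set (B -> R) :=
  [set m | is_rfunctional m /\
     forall (xs : seq B) (eps : R), 0 < eps ->
       exists f, pos_hull S f /\ forall x, x \in xs -> `|f x - m x| < eps].

Definition cone_setting (S : set (B -> R)) (e : B) (m : B -> R) (kappa : R)
  : Prop :=
  (forall l, S l -> is_rfunctional l) /\
  (forall x, (forall l, S l -> l x = 0) -> x = 0) /\
  rcone S e /\
  (forall h, exists lam : R, 0 <= lam /\ rcone S (lam *: e - h)) /\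
  (forall h : B, `|h| = inf [set lam : R | 0 <= lam /\
        forall l, S l -> 0 <= l (lam *: e + h) /\ 0 <= l (lam *: e - h)]) /\
  Sstar S m /\ m e = 1 /\
  (forall h, rcone S h -> kappa * `|h| <= m h).

(* Hilbert metric on C_R (value +oo when alpha or beta degenerates) *)
Definition hilbert_alpha (S : set (B -> R)) (h g : B) : \bar R :=
  ereal_sup [set lam%:E | lam in [set lam : R | 0 < lam /\ rcone S (g - lam *: h)]].
Definition hilbert_beta (S : set (B -> R)) (h g : B) : \bar R :=
  ereal_inf [set mu%:E | mu in [set mu : R | 0 < mu /\ rcone S (mu *: h - g)]].
Definition dH (S : set (B -> R)) (h g : B) : \bar R :=
  let a := hilbert_alpha S h g in let b := hilbert_beta S h g in
  if ((0 < a)%E && (a < +oo)%E && (0 < b)%E && (b < +oo)%E)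
  then (ln (fine b / fine a))%:E else +oo%E.

(* ---------- complexification B_C = B x B, (x,y) standing for x + iy ---- *)
Definition cscale (z : R[i]) (p : B * B) : B * B :=
  (complex.Re z *: p.1 - complex.Im z *: p.2, complex.Im z *: p.1 + complex.Re z *: p.2).

(* continuous complex-linear functional on B_C, i.e. an element of B'_C
   (the norm of B_C is equivalent to the product norm, so continuity is
   continuity for the product topology) *)
Definition is_cfunctional (l : B * B -> R[i]) : Prop :=
  (forall (z : R[i]) (p q : B * B), l (cscale z p + q) = z * l p + l q) /\
  continuous ((fun p => complex.Re (l p)) : (B * B)%type -> R^o) /\
  continuous ((fun p => complex.Im (l p)) : (B * B)%type -> R^o).

Definition cext (l : B -> R) (p : B * B) : R[i] := (l p.1 +i* l p.2)%C.

Definition ccone (S : set (B -> R)) : set (B * B) :=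
  [set p | exists (z : R[i]) (x y : B),
     z != 0 /\ rcone S x /\ rcone S y /\ p = cscale z (x, y)].

Definition ccone_dual (S : set (B -> R)) : set (B * B -> R[i]) :=
  [set l | is_cfunctional l /\ forall h, ccone S h -> l h != 0].

Definition cmod (z : R[i]) : R := Num.sqrt (complex.Re z ^+ 2 + complex.Im z ^+ 2).

Definition Eset (S : set (B -> R)) (h g : B * B) : set R[i] :=
  [set l h / l g | l in ccone_dual S].

Definition deltaC (S : set (B -> R)) (h g : B * B) : \bar R :=
  let s := ereal_sup [set (cmod z)%:E | z in Eset S h g] in
  let i := ereal_inf [set (cmod z)%:E | z in Eset S h g] in
  if ((0 < i)%E && (i < +oo)%E && (s < +oo)%E) then (ln (fine s / fine i))%:E else +oo%E.

End Real.

Section Maps.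
Variables B1 B2 : completeNormedModType R.

Definition is_rop (L : B1 -> B2) : Prop :=
  (forall (a : R) (x y : B1), L (a *: x + y) = a *: L x + L y) /\
  continuous L.

Definition is_cop (L : B1 * B1 -> B2 * B2) : Prop :=
  (forall (z : R[i]) (p q : B1 * B1),
      L (cscale z p + q) = cscale z (L p) + L q) /\
  continuous (L : (B1 * B1)%type -> (B2 * B2)%type).

End Maps.

Definition diam (T : Type) (d : T -> T -> \bar R) (A : set T) : \bar R :=
  ereal_sup [set r | exists x y, A x /\ A y /\ r = d x y].
End ConeDefs.

(* Main.v *)
Require Import Defs.
From HB Require Import structures.
From mathcomp Require Import all_boot all_order all_algebra.
From mathcomp Require Import all_classical all_reals all_analysis.
From mathcomp Require Import complex.
From mathcomp Require Import ring lra.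
Import Order.TTheory GRing.Theory Num.Theory.
Set Implicit Arguments.
Unset Strict Implicit.
Unset Printing Implicit Defensive.
Local Open Scope ring_scope.
Local Open Scope classical_set_scope.

Notation cscale := Defs.cscale.

Section Gen.
Variable R : realType.
Variable B : completeNormedModType R.
Implicit Types (x y : B) (l : B -> R).

Lemma lc2Z (a p q : R) x y : a *: (p *: x + q *: y) = (a * p) *: x + (a * q) *: y.
Proof. by rewrite scalerDr !scalerA. Qed.
Lemma lc2D (p q p' q' : R) x y :
  (p *: x + q *: y) + (p' *: x + q' *: y) = (p + p') *: x + (q + q') *: y.
Proof. by rewrite addrACA -!scalerDl. Qed.
Lemma lc2N (p q : R) x y : - (p *: x + q *: y) = (- p) *: x + (- q) *: y.
Proof. by rewrite opprD !scaleNr. Qed.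
Lemma lc2B (p q : R) x y : p *: x - q *: y = p *: x + (- q) *: y.
Proof. by rewrite scaleNr. Qed.

Lemma cscale1 (p : B * B) : cscale 1 p = p.
Proof.
case: p => x y; rewrite /cscale /=.
by rewrite !scale0r subr0 add0r !scale1r.
Qed.

Lemma cscaleM (a b : R[i]) (p : B * B) : cscale a (cscale b p) = cscale (a * b) p.
Proof.
case: p => x y; case: a => a1 a2; case: b => b1 b2; rewrite /cscale /=.
congr pair.
  rewrite !lc2B !lc2Z lc2D; congr (_ *: _ + _ *: _); ring.
rewrite !lc2B !lc2Z lc2D; congr (_ *: _ + _ *: _); ring.
Qed.

Section Lin.
Variable l : B -> R.
Hypothesis hl : is_rfunctional l.
Lemma lf0 : l 0 = 0.
Proof.
have := hl.1 1 0 0; rewrite scale1r addr0 mul1r => h.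
by have := congr1 (fun t => t - l 0) h; rewrite addrK subrr.
Qed.
Lemma lfD x y : l (x + y) = l x + l y.
Proof. by have := hl.1 1 x y; rewrite scale1r mul1r. Qed.
Lemma lfZ a x : l (a *: x) = a * l x.
Proof. by have := hl.1 a x 0; rewrite !addr0 lf0 addr0. Qed.
Lemma lfN x : l (- x) = - l x.
Proof. by rewrite -scaleN1r lfZ mulN1r. Qed.
Lemma lfB x y : l (x - y) = l x - l y.
Proof. by rewrite lfD lfN. Qed.

Lemma cext_lin (z : R[i]) (p q : B * B) :
  cext l (cscale z p + q) = z * cext l p + cext l q.
Proof.
case: p => x y; case: q => u v; case: z => a b; rewrite /cext /cscale /=.
rewrite !lfD ?lfN !lfZ.
by apply/eqP; rewrite eq_complex /=; apply/andP; split; apply/eqP; ring.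
Qed.
Lemma cext0 : cext l 0 = 0.
Proof. by rewrite /cext /= lf0. Qed.
Lemma cext_cscale (z : R[i]) (p : B * B) : cext l (cscale z p) = z * cext l p.
Proof. by rewrite -[cscale z p]addr0 cext_lin cext0 addr0. Qed.
Lemma cextD (p q : B * B) : cext l (p + q) = cext l p + cext l q.
Proof. by rewrite -{1}(cscale1 p) cext_lin mul1r. Qed.
End Lin.


Lemma cscale_diag (w : R[i]) (y : B) :
  cscale w (y, y) = ((complex.Re w - complex.Im w) *: y, (complex.Im w + complex.Re w) *: y).
Proof. by rewrite /cscale /= scalerBl scalerDl. Qed.

Lemma quarter_cone (S : set (B -> R)) (hS : forall l, S l -> is_rfunctional l)
  (u : B * B) (c : R[i]) : c != 0 ->
  (forall l, S l -> 0 <= complex.Re (c * cext l u) /\ 0 <= complex.Im (c * cext l u)) ->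
  (exists l0, S l0 /\ cext l0 u != 0) -> ccone S u.
Proof.
move=> c0 hpos [l0 [Sl0 hl0]].
have hu : u = cscale c^-1 (cscale c u) by rewrite cscaleM mulVf // cscale1.
have hv : forall l, S l -> cext l (cscale c u) = c * cext l u.
  by move=> l Sl; rewrite cext_cscale //; exact: hS.
move: hu hv; case: (cscale c u) => x y hu hv.
have hx : forall l, S l -> 0 <= l x.
  by move=> l Sl; have := (hpos l Sl).1; rewrite -hv.
have hy : forall l, S l -> 0 <= l y.
  by move=> l Sl; have := (hpos l Sl).2; rewrite -hv.
have nz : ~ (x = 0 /\ y = 0).
  move=> [x0 y0]; move: hl0; have := hv l0 Sl0.
  rewrite x0 y0 /cext /= lf0; last exact: hS.
  move=> /esym /eqP; rewrite mulf_eq0 (negbTE c0) /= => /eqP -> .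
  by rewrite /cext /= eqxx.
have ci0 : c^-1 != 0 by rewrite invr_eq0.
have [x0|x0] := eqVneq x 0.
  have y0 : y != 0 by apply/eqP => y0; exact: nz.
  exists (c^-1 * ((1/2) +i* (1/2))%C), y, y; split.
    rewrite mulf_neq0 // eq_complex /= negb_and; apply/orP; left.
    by rewrite mulf_neq0 // oner_eq0.
  split; first by split.
  split; first by split.
  rewrite -cscaleM cscale_diag /= subrr scale0r -splitr scale1r.
  by rewrite hu x0.
have [y0|y0] := eqVneq y 0.
  exists (c^-1 * ((1/2) +i* (-(1/2)))%C), x, x; split.
    rewrite mulf_neq0 // eq_complex /= negb_and; apply/orP; left.
    by rewrite mulf_neq0 // oner_eq0.
  split; first by split.
  split; first by split.
  rewrite -cscaleM cscale_diag /= opprK -splitr scale1r addNr scale0r.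
  by rewrite hu y0.
exists c^-1, x, y; do 3?split => //.
Qed.

End Gen.

Section Cmod.
Variable R : realType.
Implicit Types (x y z : R[i]) (a b : R).

Lemma cmodE z : cmod z = Normc.normc z.
Proof. by case: z. Qed.
Lemma cmod_ge0 z : 0 <= cmod z.
Proof. exact: sqrtr_ge0. Qed.
Lemma cmodM x y : cmod (x * y) = cmod x * cmod y.
Proof. by rewrite !cmodE Normc.normcM. Qed.
Lemma cmodD x y : cmod (x + y) <= cmod x + cmod y.
Proof. by rewrite !cmodE; exact: (@le_normcD R x y). Qed.
Lemma cmodV x : cmod (x^-1) = (cmod x)^-1.
Proof. by rewrite !cmodE Normc.normcV. Qed.
Lemma cmod_eq0 x : cmod x = 0 -> x = 0.
Proof. by rewrite cmodE; exact: Normc.eq0_normc. Qed.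
Lemma cmod_gt0 x : x != 0 -> 0 < cmod x.
Proof.
move=> x0; rewrite lt_neqAle cmod_ge0 andbT eq_sym; apply/eqP => /cmod_eq0 h.
by rewrite h eqxx in x0.
Qed.
Lemma cmodN x : cmod (- x) = cmod x.
Proof. by case: x => a b; rewrite /cmod /= !sqrrN. Qed.
Lemma cmodB x y : cmod (x - y) <= cmod x + cmod y.
Proof. by rewrite -(cmodN y); exact: cmodD. Qed.
Lemma Re_le_cmod x : `|complex.Re x| <= cmod x.
Proof.
case: x => a b; rewrite /cmod /= -sqrtr_sqr ler_sqrt ?addr_ge0 ?sqr_ge0 //.
by rewrite lerDl sqr_ge0.
Qed.
Lemma Im_le_cmod x : `|complex.Im x| <= cmod x.
Proof.
case: x => a b; rewrite /cmod /= -sqrtr_sqr ler_sqrt ?addr_ge0 ?sqr_ge0 //.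
by rewrite lerDr sqr_ge0.
Qed.
Lemma Re_ge_ncmod x : - cmod x <= complex.Re x.
Proof. by rewrite lerNl; apply: le_trans (Re_le_cmod x); rewrite -normrN ler_norm. Qed.
Lemma Im_ge_ncmod x : - cmod x <= complex.Im x.
Proof. by rewrite lerNl; apply: le_trans (Im_le_cmod x); rewrite -normrN ler_norm. Qed.
Lemma cmodR a : cmod (a%:C)%C = `|a|.
Proof. by rewrite /cmod /= expr0n /= addr0 sqrtr_sqr. Qed.
Lemma cmod_pair a b : cmod (a +i* b)%C = Num.sqrt (a ^+ 2 + b ^+ 2).
Proof. by []. Qed.
End Cmod.

Section Num.
Variable R : realType.

Lemma numN (s K n1 n2 a b : R) : 0 < s -> 1 <= K -> 0 <= n1 -> 0 <= n2 ->
  n1 ^+ 2 = 1 + s ^+ 2 -> n2 ^+ 2 = 1 + s ^+ 2 * K ^+ 2 -> 0 <= a ->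
  s * a <= b -> b <= s * K * a ->
  let S1 := n1 + n2 in let S2 := s * (n2 + n1 * K) in
  a * n1 * (1 + s ^+ 2 * K) <= (S1 + S2) * a - (S1 - S2) * b /\
  a * n1 * (1 + s ^+ 2 * K) <= (S1 + S2) * b + (S1 - S2) * a.
Proof.
move=> s0 K1 n10 n20 hn1 hn2 a0 hb1 hb2 S1 S2.
have sqle : forall x y : R, 0 <= x -> 0 <= y -> x ^+ 2 <= y ^+ 2 -> x <= y.
  by move=> x y x0 y0; rewrite ler_pXn2r // nnegrE.
have n11 : 1 <= n1 by apply: sqle => //; rewrite hn1 expr1n lerDl sqr_ge0.
have n1s : s <= n1 by apply: sqle => //; [exact: ltW | rewrite hn1 lerDr ler01].
have n2K : s * K <= n2.
  apply: sqle => //; first by rewrite mulr_ge0 // ltW // (lt_le_trans ltr01).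
  by rewrite hn2 exprMn lerDr ler01.
have n21 : n1 <= n2.
  have : n1 ^+ 2 <= n2 ^+ 2.
    by rewrite hn1 hn2 lerD2l -{1}(mulr1 (s ^+ 2)) ler_wpM2l ?sqr_ge0 // exprn_ege1.
  by rewrite ler_pXn2r // nnegrE.
have n12 : s * K <= n1 * n2 by nra.
have E1 : n1 * (1 + s ^+ 2 * K) <= S1 + S2 - (S1 - S2) * s.
  have -> : S1 + S2 - (S1 - S2) * s = n1 * (1 + s ^+ 2 * K) + (n2 * (1 + s ^+ 2) + n1 * s * (K - 1)).
    rewrite /S1 /S2; ring.
  rewrite lerDl; apply: addr_ge0; apply: mulr_ge0 => //.
  - by rewrite addr_ge0 ?sqr_ge0.
  - by rewrite mulr_ge0 // ltW.
  - by rewrite subr_ge0.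
have E2 : n1 * (1 + s ^+ 2 * K) <= S1 + S2 - (S1 - S2) * (s * K).
  have -> : S1 + S2 - (S1 - S2) * (s * K) =
     n2 * (n1 * n2 + 1 + s ^+ 2 * K - s * (K - 1)) + n1 * (1 + s ^+ 2 * K ^+ 2 - n2 ^+ 2).
    rewrite /S1 /S2; ring.
  rewrite -hn2 subrr mulr0 addr0.
  have : n2 * (1 + s ^+ 2 * K) <= n2 * (n1 * n2 + 1 + s ^+ 2 * K - s * (K - 1)) by nra.
  apply: le_trans; nra.
have E3 : n1 * (1 + s ^+ 2 * K) <= (S1 + S2) * s + (S1 - S2).
  have -> : (S1 + S2) * s + (S1 - S2) =
     n1 * (n1 * n2 + 1 + s ^+ 2 * K - s * (K - 1)) + n2 * (1 + s ^+ 2 - n1 ^+ 2).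
    rewrite /S1 /S2; ring.
  rewrite -hn1 subrr mulr0 addr0; nra.
have K0 : 0 <= K by lra.
have Z1 : 0 <= S1 + S2.
  by rewrite /S1 /S2 !(addr_ge0, mulr_ge0) // ltW.
split.
  have [Z2|Z2] := lerP 0 (S1 - S2).
    have : (S1 - S2) * b <= (S1 - S2) * (s * K * a) by nra.
    nra.
  have : (S1 - S2) * b <= (S1 - S2) * (s * a) by nra.
  nra.
have : (S1 + S2) * (s * a) <= (S1 + S2) * b by nra.
nra.
Qed.

Lemma sqrt2_sq : Num.sqrt (2 : R) ^+ 2 = 2.
Proof. by rewrite sqr_sqrtr // ler0n. Qed.
Lemma sqrt2_gt1 : 1 < Num.sqrt (2 : R).
Proof. rewrite -{1}sqrtr1 ltr_sqrt //; lra. Qed.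

Lemma numZ (s K n1 n2 : R) : 0 < s -> 1 <= K -> 0 <= n1 -> 0 <= n2 ->
  n1 ^+ 2 = 1 + s ^+ 2 -> n2 ^+ 2 = 1 + s ^+ 2 * K ^+ 2 ->
  ((n1 + n2) + s * (n2 + n1 * K)) ^+ 2 + ((n1 + n2) - s * (n2 + n1 * K)) ^+ 2
   <= (2 * Num.sqrt 2 * n1 * n2) ^+ 2.
Proof.
move=> s0 K1 n10 n20 hn1 hn2.
set S1 := n1 + n2; set S2 := s * (n2 + n1 * K).
have al : 1 + s ^+ 2 * K <= n1 * n2.
  have : (1 + s ^+ 2 * K) ^+ 2 <= (n1 * n2) ^+ 2.
    rewrite exprMn hn1 hn2.
    have : 2 * K <= 1 + K ^+ 2 by nra.
    have : 0 <= s ^+ 2 by exact: sqr_ge0.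
    nra.
  by rewrite ler_pXn2r // nnegrE ?mulr_ge0 // addr_ge0 // mulr_ge0 ?sqr_ge0 //; lra.
have -> : (S1 + S2) ^+ 2 + (S1 - S2) ^+ 2 =
   2 * (n1 ^+ 2 * (1 + s ^+ 2 * K ^+ 2) + n2 ^+ 2 * (1 + s ^+ 2) + 2 * n1 * n2 * (1 + s ^+ 2 * K)).
  rewrite /S1 /S2; ring.
rewrite -hn1 -hn2 !exprMn sqrt2_sq.
have : 0 <= n1 * n2 by exact: mulr_ge0.
nra.
Qed.

Lemma num_sK (s K n2 : R) : 0 < s -> 1 <= K -> 0 <= n2 -> n2 ^+ 2 = 1 + s ^+ 2 * K ^+ 2 ->
  1 + s * K <= Num.sqrt 2 * n2.
Proof.
move=> s0 K1 n20 hn2.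
have h : 0 <= Num.sqrt 2 * n2 by rewrite mulr_ge0 // sqrtr_ge0.
rewrite -(@ler_pXn2r _ 2) // ?nnegrE //; last by rewrite addr_ge0 // mulr_ge0 //; lra.
rewrite exprMn sqrt2_sq hn2.
have : 0 <= (1 - s * K) ^+ 2 by exact: sqr_ge0.
nra.
Qed.
End Num.

Section Hil.
Variable R : realType.
Variable B : completeNormedModType R.
Variable S : set (B -> R).
Hypothesis hS : forall l, S l -> is_rfunctional l.

Lemma hcmp (g g' : B) (d : R) : rcone S g -> rcone S g' -> (dH S g g' <= d%:E)%E ->
  exists al be : R, [/\ 0 < al, be <= expR d * al &
     forall l, S l -> al * l g <= l g' /\ l g' <= be * l g].
Proof.
move=> [g0 hg] [g'0 hg'] hd.
have Aub : forall t : R, (t%:E < hilbert_alpha S g g')%E -> forall l, S l -> t * l g <= l g'.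
  move=> t /ereal_sup_gt [y [lam [lam0 [_ hc]] <-]]; rewrite lte_fin => lt l Sl.
  have := hc l Sl; rewrite (lfB (hS Sl)) (lfZ (hS Sl)).
  have := hg l Sl; nra.
have Bub : forall t : R, (hilbert_beta S g g' < t%:E)%E -> forall l, S l -> l g' <= t * l g.
  move=> t /ereal_inf_lt [y [lam [lam0 [_ hc]] <-]]; rewrite lte_fin => lt l Sl.
  have := hc l Sl; rewrite (lfB (hS Sl)) (lfZ (hS Sl)).
  have := hg l Sl; nra.
move: hd Aub Bub; rewrite /dH /=.
case: ifP => [/andP[/andP[/andP[a0 aoo] b0] boo] | _]; last by rewrite leye_eq.
have af : hilbert_alpha S g g' \is a fin_num by rewrite fin_numElt aoo (lt_trans _ a0) ?ltNy0.
have bf : hilbert_beta S g g' \is a fin_num by rewrite fin_numElt boo (lt_trans _ b0) ?ltNy0.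
rewrite -(fineK af) -(fineK bf) in a0 b0 *.
move: (fine (hilbert_alpha S g g')) (fine (hilbert_beta S g g')) a0 b0 => al be.
rewrite !lte_fin => al0 be0 /=.
rewrite lee_fin => hd Aub Bub.
exists al, be; split => //.
  have hpos : 0 < be / al by rewrite divr_gt0.
  rewrite -ler_pdivrMr // mulrC [_^-1 * _]mulrC.
  by rewrite -[X in X <= _](@lnK _ (be / al)) ?posrE // ler_expR.
move=> l Sl; have lg0 := hg l Sl; have lg'0 := hg' l Sl; split.
  rewrite leNgt; apply/negP => h.
  have lgp : 0 < l g by nra.
  have qlt : l g' / l g < al by rewrite ltr_pdivrMr // mulrC.
  have qe : l g' / l g * l g = l g' by rewrite mulfVK // gt_eqF.
  have := Aub ((l g' / l g + al) / 2) _ l Sl.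
  rewrite lte_fin => /(_ ltac:(lra)).
  move: qe qlt; set q := l g' / l g; nra.
rewrite leNgt; apply/negP => h.
have [lgz|lgp] := eqVneq (l g) 0.
  have := Bub (be + 1) _ l Sl; rewrite lte_fin lgz => /(_ ltac:(lra)).
  move: h; rewrite lgz; lra.
have lgp' : 0 < l g by rewrite lt_neqAle eq_sym lgp.
have qlt : be < l g' / l g by rewrite ltr_pdivlMr // mulrC.
have qe : l g' / l g * l g = l g' by rewrite mulfVK.
have := Bub ((l g' / l g + be) / 2) _ l Sl.
rewrite lte_fin => /(_ ltac:(lra)).
move: qe qlt; set q := l g' / l g; nra.
Qed.
End Hil.

Section Del.
Variable R : realType.
Variable B : completeNormedModType R.
Variable S : set (B -> R).

Lemma dual_bounds (p q : B * B) (r1 r2 : R) (l : B * B -> R[i]) :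
  0 < r1 -> 0 < r2 -> ccone S p -> ccone S q -> ccone_dual S l ->
  (forall w, cmod w < r1 -> ccone S (cscale (- w) q + p)) ->
  (forall w, cmod w < r2 -> ccone S (cscale (- w) p + q)) ->
  r1 <= cmod (l p / l q) <= r2^-1.
Proof.
move=> r10 r20 Cp Cq [[hl _] hnz] H1 H2.
have lp0 := hnz p Cp; have lq0 := hnz q Cq.
apply/andP; split.
  rewrite leNgt; apply/negP => /H1 /hnz; rewrite hl.
  by rewrite mulNr divfK // addNr eqxx.
have : r2 <= cmod (l q / l p).
  rewrite leNgt; apply/negP => /H2 /hnz; rewrite hl.
  by rewrite mulNr divfK // addNr eqxx.
rewrite -invf_div cmodV => h.
have h0 : 0 < cmod (l p / l q) by apply: cmod_gt0; rewrite mulf_neq0 // invr_eq0.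
by rewrite -[cmod _](invrK) lef_pV2 ?posrE ?invr_gt0.
Qed.

Lemma deltaC_le (p q : B * B) (r1 r2 : R) (l0 : B * B -> R[i]) :
  0 < r1 -> 0 < r2 -> ccone S p -> ccone S q -> ccone_dual S l0 ->
  (forall w, cmod w < r1 -> ccone S (cscale (- w) q + p)) ->
  (forall w, cmod w < r2 -> ccone S (cscale (- w) p + q)) ->
  (deltaC S p q <= (ln ((r1 * r2)^-1))%:E)%E.
Proof.
move=> r10 r20 Cp Cq D0 H1 H2.
have hb : forall x, [set (cmod z)%:E | z in Eset S p q] x ->
    exists2 t : R, x = t%:E & r1 <= t <= r2^-1.
  move=> x [z [l Dl <-] <-]; exists (cmod (l p / l q)) => //.
  exact: dual_bounds.
have e0 : [set (cmod z)%:E | z in Eset S p q] (cmod (l0 p / l0 q))%:E.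
  by exists (l0 p / l0 q) => //; exists l0.
have [/andP[e1 e2]] := dual_bounds r10 r20 Cp Cq D0 H1 H2.
set Sv := [set (cmod z)%:E | z in Eset S p q] in hb e0 *.
have iub : (ereal_inf Sv <= (cmod (l0 p / l0 q))%:E)%E by exact: ereal_inf_lbound.
have ilb : (r1%:E <= ereal_inf Sv)%E.
  by apply: le_ereal_inf_tmp => x /hb [t -> /andP[+ _]]; rewrite lee_fin.
have sub : (ereal_sup Sv <= (r2^-1)%:E)%E.
  by apply: ge_ereal_sup => x /hb [t -> /andP[_ +]]; rewrite lee_fin.
have slb : ((cmod (l0 p / l0 q))%:E <= ereal_sup Sv)%E by exact: ereal_sup_ubound.
have ifin : ereal_inf Sv \is a fin_num.
  by rewrite fin_numElt (lt_le_trans _ ilb) ?ltNyr // (le_lt_trans iub) ?ltry.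
have sfin : ereal_sup Sv \is a fin_num.
  by rewrite fin_numElt (lt_le_trans _ slb) ?ltNyr // (le_lt_trans sub) ?ltry.
rewrite /deltaC /= -/Sv.
move: ilb iub sub slb; rewrite -(fineK ifin) -(fineK sfin) !lee_fin => ilb iub sub slb.
rewrite !lte_fin ltry (lt_le_trans r10 ilb) /= ltry lee_fin.
have i0 : 0 < fine (ereal_inf Sv) by exact: (lt_le_trans r10 ilb).
rewrite ler_ln ?posrE ?divr_gt0 ?invr_gt0 ?mulr_gt0 //; last first.
  by apply: (lt_le_trans i0); apply: (le_trans iub).
have -> : (r1 * r2)^-1 = r2^-1 * r1^-1 by rewrite invfM mulrC.
apply: ler_pM => //.
- by apply: (le_trans _ slb); apply: (le_trans (ltW r10)).
- by rewrite invr_ge0 ltW.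
- by rewrite lef_pV2 ?posrE.
Qed.
End Del.

Section Pt.
Variable R : realType.

Lemma ReD (x y : R[i]) : complex.Re (x + y) = complex.Re x + complex.Re y.
Proof. by case: x; case: y. Qed.
Lemma ImD (x y : R[i]) : complex.Im (x + y) = complex.Im x + complex.Im y.
Proof. by case: x; case: y. Qed.
Lemma cmod_i : cmod ('i : R[i])%C = 1.
Proof. by rewrite cmod_pair expr0n /= expr1n add0r sqrtr1. Qed.

Definition zeta (s K : R) : R[i] :=
  let n1 := Num.sqrt (1 + s ^+ 2) in let n2 := Num.sqrt (1 + s ^+ 2 * K ^+ 2) in
  (((n1 + n2) + s * (n2 + n1 * K)) +i* ((n1 + n2) - s * (n2 + n1 * K)))%C.

Lemma zeta_norm (s K : R) : 0 < s -> 1 <= K ->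
  cmod (zeta s K) <= 2 * Num.sqrt 2 * Num.sqrt (1 + s ^+ 2) * Num.sqrt (1 + s ^+ 2 * K ^+ 2).
Proof.
move=> s0 K1; rewrite /zeta /=.
set n1 := Num.sqrt (1 + s ^+ 2); set n2 := Num.sqrt (1 + s ^+ 2 * K ^+ 2).
rewrite cmod_pair.
have n10 : 0 <= n1 by exact: sqrtr_ge0.
have n20 : 0 <= n2 by exact: sqrtr_ge0.
have hn1 : n1 ^+ 2 = 1 + s ^+ 2 by rewrite sqr_sqrtr // addr_ge0 // sqr_ge0.
have hn2 : n2 ^+ 2 = 1 + s ^+ 2 * K ^+ 2 by rewrite sqr_sqrtr // addr_ge0 // mulr_ge0 // sqr_ge0.
have := numZ s0 K1 n10 n20 hn1 hn2.
rewrite -(ler_sqrt) ?sqr_ge0 // sqrtr_sqr => h.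
by apply: (le_trans h); rewrite ger0_norm // !mulr_ge0 ?sqrtr_ge0.
Qed.

Lemma zeta_neq0 (s K : R) : 0 < s -> 1 <= K -> zeta s K != 0.
Proof.
move=> s0 K1; rewrite /zeta eq_complex /= negb_and; apply/orP; left.
set n1 := Num.sqrt (1 + s ^+ 2); set n2 := Num.sqrt (1 + s ^+ 2 * K ^+ 2).
have h1 : 0 < n1 by rewrite sqrtr_gt0; have := sqr_ge0 s; lra.
have h2 : 0 <= n2 by exact: sqrtr_ge0.
have h3 : 0 <= s * (n2 + n1 * K).
  apply: mulr_ge0; [exact: ltW|]; apply: addr_ge0 => //; apply: mulr_ge0; [exact: ltW|lra].
rewrite gt_eqF //; lra.
Qed.

Lemma point_est (s K eps ax f a b : R) (A B : R[i]) :
  0 < s -> 1 <= K -> 0 <= eps -> 4 * eps * K <= 1 -> 0 <= ax -> 0 <= f ->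
  ax * f <= a -> a <= K * ax * f -> s * a <= b -> b <= s * K * a ->
  cmod (A - (a%:C)%C) <= eps * a -> cmod (B - (b%:C)%C) <= eps * b ->
  let n1 := Num.sqrt (1 + s ^+ 2) in let n2 := Num.sqrt (1 + s ^+ 2 * K ^+ 2) in
  let mu := ax * n1 * n2 ^+ 2 * (K^-1 - 4 * eps) in
  [/\ mu * f <= complex.Re (zeta s K * ('i%C * B + A)),
      mu * f <= complex.Im (zeta s K * ('i%C * B + A)) &
      cmod ('i%C * B + A) <= K * ax * f * n2 * (1 + Num.sqrt 2 * eps)].
Proof.
move=> s0 K1 e0 eK ax0 f0 ha1 ha2 hb1 hb2 hA hB n1 n2 mu.
have n10 : 0 <= n1 by exact: sqrtr_ge0.
have n20 : 0 <= n2 by exact: sqrtr_ge0.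
have hn1 : n1 ^+ 2 = 1 + s ^+ 2 by rewrite sqr_sqrtr // addr_ge0 // sqr_ge0.
have hn2 : n2 ^+ 2 = 1 + s ^+ 2 * K ^+ 2 by rewrite sqr_sqrtr // addr_ge0 // mulr_ge0 // sqr_ge0.
have K0 : 0 < K by lra.
have a0 : 0 <= a by apply: le_trans ha1; exact: mulr_ge0.
have s2 := sqrt2_sq R.
have s20 : 0 <= Num.sqrt (2 : R) by exact: sqrtr_ge0.
have hsK := num_sK s0 K1 n20 hn2.
set E := (A - (a%:C)%C) + 'i%C * (B - (b%:C)%C).
have hT : 'i%C * B + A = (a +i* b)%C + E.
  rewrite /E; apply/eqP; rewrite eq_complex; case: A {hA E} => A1 A2; case: B {hB} => B1 B2 /=.
  by apply/andP; split; apply/eqP; ring.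
have hE : cmod E <= eps * (a + b).
  rewrite mulrDr; apply: (le_trans (cmodD _ _)); apply: lerD => //.
  by rewrite cmodM cmod_i mul1r.
have hab : a + b <= a * (Num.sqrt 2 * n2).
  have : a * (1 + s * K) <= a * (Num.sqrt 2 * n2) by exact: ler_wpM2l.
  lra.
have hz := zeta_norm s0 K1.
rewrite -/n1 -/n2 in hz.
have cz0 : 0 <= cmod (zeta s K) by exact: cmod_ge0.
have hzE : cmod (zeta s K * E) <= 4 * n1 * n2 ^+ 2 * eps * a.
  rewrite cmodM.
  have E0 : 0 <= cmod E by exact: cmod_ge0.
  apply: (le_trans (ler_pM cz0 E0 hz hE)).
  have : 0 <= 2 * Num.sqrt 2 * n1 * n2 * eps by rewrite !mulr_ge0.
  move: hab; set q := Num.sqrt 2 => hab h.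
  have -> : 4 * n1 * n2 ^+ 2 * eps * a = 2 * q * n1 * n2 * eps * (a * (q * n2)).
    rewrite [RHS](_ : _ = 2 * q ^+ 2 * n1 * n2 ^+ 2 * eps * a); last by ring.
    by rewrite /q s2; ring.
  rewrite -[X in _ <= X]mulrA; apply: ler_wpM2l.
    by rewrite !mulr_ge0 // ler0n.
  by apply: ler_wpM2l.
have [N1 N2] := numN s0 K1 n10 n20 hn1 hn2 a0 hb1 hb2.
have al : n2 ^+ 2 <= K * (1 + s ^+ 2 * K).
  rewrite hn2 mulrDr mulr1.
  have -> : K * (s ^+ 2 * K) = s ^+ 2 * K ^+ 2 by ring.
  lra.
have key : mu * f <= a * n1 * (1 + s ^+ 2 * K) - 4 * n1 * n2 ^+ 2 * eps * a.
  have h1 : 0 <= n1 * n2 ^+ 2 * (K^-1 - 4 * eps).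
    apply: mulr_ge0; first by rewrite mulr_ge0 ?sqr_ge0.
    by rewrite subr_ge0 -div1r ler_pdivlMr.
  have -> : mu * f = (ax * f) * (n1 * n2 ^+ 2 * (K^-1 - 4 * eps)) by rewrite /mu; ring.
  apply: (le_trans (ler_wpM2r h1 ha1)).
  have -> : a * n1 * (1 + s ^+ 2 * K) - 4 * n1 * n2 ^+ 2 * eps * a =
    a * n1 * ((1 + s ^+ 2 * K) - 4 * n2 ^+ 2 * eps) by ring.
  have h3 : n2 ^+ 2 / K <= 1 + s ^+ 2 * K by rewrite ler_pdivrMr // mulrC.
  have h2 : n2 ^+ 2 * (K^-1 - 4 * eps) <= 1 + s ^+ 2 * K - 4 * n2 ^+ 2 * eps.
    have -> : n2 ^+ 2 * (K^-1 - 4 * eps) = n2 ^+ 2 / K - 4 * n2 ^+ 2 * eps by ring.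
    lra.
  have an : 0 <= a * n1 by exact: mulr_ge0.
  have -> : a * (n1 * n2 ^+ 2 * (K^-1 - 4 * eps)) = (a * n1) * (n2 ^+ 2 * (K^-1 - 4 * eps)) by ring.
  exact: ler_wpM2l.
split.
- rewrite hT mulrDr ReD; apply: (le_trans key); apply: lerD.
    by move: N1; rewrite /zeta /= -/n1 -/n2.
  by apply: le_trans (Re_ge_ncmod _); rewrite lerN2.
- rewrite hT mulrDr ImD; apply: (le_trans key); apply: lerD.
    by move: N2; rewrite /zeta /= -/n1 -/n2.
  by apply: le_trans (Im_ge_ncmod _); rewrite lerN2.
- rewrite hT; apply: (le_trans (cmodD _ _)).
  have hT0 : cmod (a +i* b)%C <= a * n2.
    rewrite cmod_pair -[X in _ <= X]ger0_norm ?mulr_ge0 // -sqrtr_sqr.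
    rewrite ler_sqrt ?sqr_ge0 // exprMn hn2 mulrDr mulr1.
    have : b ^+ 2 <= (s * K * a) ^+ 2 by rewrite ler_pXn2r ?nnegrE //; [nra| nra].
    rewrite !exprMn; lra.
  have : cmod E <= eps * (a * (Num.sqrt 2 * n2)).
    by apply: (le_trans hE); rewrite ler_wpM2l.
  move=> h2.
  have : a * n2 * (1 + Num.sqrt 2 * eps) <= K * ax * f * n2 * (1 + Num.sqrt 2 * eps).
    rewrite ler_wpM2r // ?ler_wpM2r //; first by rewrite addr_ge0 // mulr_ge0.
  move=> h3; apply: le_trans h3.
  have -> : a * n2 * (1 + Num.sqrt 2 * eps) = a * n2 + eps * (a * (Num.sqrt 2 * n2)) by ring.
  exact: lerD.
Qed.
End Pt.

Section Main.
Variable R : realType.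
Variables B1 B2 : completeNormedModType R.
Variables (S1 : set (B1 -> R)) (S2 : set (B2 -> R)) (e1 : B1) (e2 : B2)
  (m1 : B1 -> R) (m2 : B2 -> R) (kappa : R).
Hypothesis hkappa : 0 < kappa < 1.
Hypothesis hset1 : cone_setting S1 e1 m1 kappa.
Hypothesis hset2 : cone_setting S2 e2 m2 kappa.
Variables (L : B1 -> B2) (LC : B1 * B1 -> B2 * B2).
Hypothesis hLC : is_cop LC.
Hypothesis hLcone : forall h, rcone S1 h -> rcone S2 (L h).
Hypothesis hDelta : (diam (dH S2) (L @` rcone S1) < +oo)%E.
Variable eps : R.
Hypothesis heps0 : 0 < eps.
Hypothesis heps1 : eps < kappa ^+ 2 / (12 * Num.sqrt 2)
                 * expR (- 2 * fine (diam (dH S2) (L @` rcone S1))).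
Hypothesis hclose : forall l h, S2 l -> rcone S1 h ->
     cmod (cext l (LC (h, 0)) - ((l (L h))%:C)%C) <= eps * l (L h).

Let hS2 : forall l, S2 l -> is_rfunctional l := hset2.1.
Let hsep2 : forall x, (forall l, S2 l -> l x = 0) -> x = 0 := hset2.2.1.
Let he1 : rcone S1 e1 := hset1.2.2.1.
Let h0 := L e1.
Let h0c : rcone S2 h0 := hLcone he1.
Let Img := L @` rcone S1.

Lemma LCD p q : LC (p + q) = LC p + LC q.
Proof. by rewrite -{1}(cscale1 p) hLC.1 cscale1. Qed.
Lemma LC0 : LC 0 = 0.
Proof. by apply: (addrI (LC 0)); rewrite -LCD !addr0. Qed.
Lemma LCZ z p : LC (cscale z p) = cscale z (LC p).
Proof. by rewrite -[cscale z p]addr0 hLC.1 LC0 addr0. Qed.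
Lemma pair_dec (x y : B1) : (x, y) = cscale 'i%C (y, 0) + (x, 0).
Proof.
rewrite /Defs.cscale /= scale0r scaler0 scale1r subr0.
by apply: injective_projections => /=; rewrite ?scaler0 ?add0r ?addr0.
Qed.

Lemma l0_ex : exists l0, S2 l0 /\ 0 < l0 h0.
Proof.
case: (pselect (exists l0, S2 l0 /\ 0 < l0 h0)) => // hn; exfalso.
have : h0 = 0.
  apply: hsep2 => l Sl; apply/eqP; rewrite eq_le h0c.2 // andbT leNgt.
  by apply/negP => lt; apply: hn; exists l.
by apply/eqP; exact: h0c.1.
Qed.

Lemma dH_nNy (g g' : B2) : dH S2 g g' != -oo%E.
Proof. by rewrite /dH; case: ifP. Qed.

Lemma Dfin : diam (dH S2) Img \is a fin_num.
Proof.
have img0 : Img h0 by exists e1.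
have : (dH S2 h0 h0 <= diam (dH S2) Img)%E.
  by apply: ereal_sup_ubound; exists h0, h0.
rewrite fin_numElt hDelta andbT => h; apply: (lt_le_trans _ h).
by rewrite ltNye dH_nNy.
Qed.

Let D := fine (diam (dH S2) Img).
Let K := expR D.

Lemma dH_le g g' : Img g -> Img g' -> (dH S2 g g' <= D%:E)%E.
Proof.
move=> ig ig'; rewrite /D fineK; last exact: Dfin.
by apply: ereal_sup_ubound; exists g, g'.
Qed.

Lemma imgC g : Img g -> rcone S2 g.
Proof. by case=> x hx <-; exact: hLcone. Qed.

Lemma cmpK g g' : Img g -> Img g' -> exists al, 0 < al /\
  forall l, S2 l -> al * l g <= l g' /\ l g' <= K * al * l g.
Proof.
move=> ig ig'.
have [al [be [al0 hbe hl]]] := hcmp hS2 (imgC ig) (imgC ig') (dH_le ig ig').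
exists al; split => // l Sl; have [h1 h2] := hl l Sl; split => //.
apply: (le_trans h2); apply: ler_wpM2r => //; exact: (imgC ig).2.
Qed.

Lemma K1 : 1 <= K.
Proof.
have ih0 : Img h0 by exists e1.
have [l0 [Sl0 pos]] := l0_ex.
have [al [be [al0 hbe hl]]] := hcmp hS2 h0c h0c (dH_le ih0 ih0).
have [h1 h2] := hl l0 Sl0.
have al1 : al <= 1 by rewrite -(ler_pM2r pos) mul1r.
have be1 : 1 <= be by rewrite -(ler_pM2r pos) mul1r.
have K0 : 0 < K by exact: expR_gt0.
rewrite /K; nra.
Qed.

Lemma D0 : 0 <= D.
Proof. by rewrite -(ler_expR) expR0; exact: K1. Qed.


Local Notation s2 := (Num.sqrt (2 : R)).

Lemma epsK : eps * (12 * s2 * K ^+ 2) < kappa ^+ 2.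
Proof.
have s20 : 0 < s2 by rewrite sqrtr_gt0 ltr0n.
have hK : expR (- 2 * D) * K ^+ 2 = 1.
  rewrite /K expr2 mulrA -!expRD.
  have -> : - 2 * D + D + D = 0 by ring.
  exact: expR0.
have c0 : 0 < 12 * s2 * K ^+ 2.
  by apply: mulr_gt0; [apply: mulr_gt0 => //; rewrite ltr0n | exact: exprn_gt0 (expR_gt0 _)].
have h := heps1; rewrite -(ltr_pM2r c0) in h.
apply: (lt_le_trans h).
rewrite -/D.
have -> : kappa ^+ 2 / (12 * s2) * expR (- 2 * D) * (12 * s2 * K ^+ 2) =
   kappa ^+ 2 * (expR (- 2 * D) * K ^+ 2).
  by field; rewrite gt_eqF.
by rewrite hK mulr1.
Qed.

Lemma kappa2 : kappa ^+ 2 < 1.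
Proof. by case/andP: hkappa => k0 k1; rewrite expr_lt1 // ltW. Qed.

Definition rho := (K^-1 - 4 * eps) / (2 * s2 * K * (1 + s2 * eps)).

Lemma eps4K : 4 * eps * K < 1.
Proof.
have := epsK; have := kappa2; have := K1; have := sqrt2_gt1 R; move=> a b c d.
have : 4 * eps * K <= eps * (12 * s2 * K ^+ 2).
  rewrite expr2; have e0 : 0 <= eps by exact: ltW.
  have sK : 1 <= s2 * K by nra.
  have : 4 * K <= 12 * s2 * (K * K) by nra.
  move=> h; have -> : 4 * eps * K = eps * (4 * K) by ring.
  exact: ler_wpM2l.
lra.
Qed.

Lemma rho_gt0 : 0 < rho.
Proof.
have K0 : 0 < K by exact: expR_gt0.
have s20 : 0 < s2 by rewrite sqrtr_gt0 ltr0n.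
rewrite /rho divr_gt0 //.
  rewrite subr_gt0 -div1r ltr_pdivlMr //; exact: eps4K.
by rewrite !mulr_gt0 // ?ltr0n // addr_gt0 // mulr_gt0.
Qed.

Lemma rho_inv : rho^-1 <= 3 * s2 * K ^+ 2.
Proof.
have K0 : 0 < K by exact: expR_gt0.
have s20 : 0 < s2 by rewrite sqrtr_gt0 ltr0n.
have r0 := rho_gt0.
rewrite -(ler_pM2r r0) mulVf ?gt_eqF //.
rewrite /rho.
have d0 : 0 < 2 * s2 * K * (1 + s2 * eps) by rewrite !mulr_gt0 // ?ltr0n // addr_gt0 // mulr_gt0.
rewrite mulrA ler_pdivlMr // mul1r.
have -> : 3 * s2 * K ^+ 2 * (K^-1 - 4 * eps) = s2 * K * (3 - 12 * eps * K).
  by rewrite expr2; field; rewrite gt_eqF.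
have h := epsK; have := kappa2; have := K1; have := sqrt2_gt1 R; have := sqrt2_sq R.
move=> q2 q1 k1 k2.
have e0 : 0 < eps := heps0.
have hA : 12 * eps * K * (6 / 5) <= 1.
  have : 12 * eps * K * (6/5) <= eps * (12 * s2 * K ^+ 2).
    have s65 : 6 / 5 <= s2.
      rewrite leNgt; apply/negP => hl.
      have : s2 * s2 < 6 / 5 * (6 / 5) by apply: ltr_pM => //; apply: ltW; lra.
      rewrite -expr2 q2; lra.
    have : 6 / 5 <= s2 * K by nra.
    rewrite expr2 => h65.
    have -> : eps * (12 * s2 * (K * K)) = (12 * eps * K) * (s2 * K) by ring.
    apply: ler_wpM2l => //; rewrite !mulr_ge0 //; lra.
  lra.
have hB : 2 * s2 * eps <= 1 / 6.
  have : 2 * s2 * eps * 6 <= eps * (12 * s2 * K ^+ 2).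
    have hk : 1 <= K ^+ 2 by rewrite expr_ge1 //; lra.
    have -> : eps * (12 * s2 * K ^+ 2) = (2 * s2 * eps * 6) * K ^+ 2 by ring.
    rewrite -{1}(mulr1 (2 * s2 * eps * 6)); apply: ler_wpM2l => //.
    rewrite !mulr_ge0 //; lra.
  lra.
have h3 : 2 * (1 + s2 * eps) <= 3 - 12 * eps * K by lra.
have -> : 2 * s2 * K * (1 + s2 * eps) = s2 * K * (2 * (1 + s2 * eps)) by ring.
apply: ler_wpM2l => //; apply: mulr_ge0; [exact: ltW | exact: ltW].
Qed.

Lemma cextLC (z : R[i]) (x y : B1) l : S2 l ->
  cext l (LC (cscale z (x, y))) = z * ('i%C * cext l (LC (y, 0)) + cext l (LC (x, 0))).
Proof.
move=> Sl; have hl := hS2 Sl.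
by rewrite LCZ (cext_cscale hl) pair_dec LCD LCZ (cextD hl) (cext_cscale hl).
Qed.

Lemma PP u : ccone S1 u -> exists c mu M, [/\ c != 0, 0 < mu, 0 < M,
  rho * (cmod c * M) <= mu &
  forall l, S2 l -> [/\ mu * l h0 <= complex.Re (c * cext l (LC u)),
                       mu * l h0 <= complex.Im (c * cext l (LC u)) &
                       cmod (cext l (LC u)) <= M * l h0]].
Proof.
case=> z [x [y [z0 [hx [hy ->]]]]].
have ix : Img (L x) by exists x.
have iy : Img (L y) by exists y.
have ih0 : Img h0 by exists e1.
have [ax [ax0 hax]] := cmpK ih0 ix.
have [sg [sg0 hsg]] := cmpK ix iy.
have k1 := K1.
have K0 : 0 < K by exact: expR_gt0.
have s20 : 0 < s2 by rewrite sqrtr_gt0 ltr0n.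
set n1 := Num.sqrt (1 + sg ^+ 2); set n2 := Num.sqrt (1 + sg ^+ 2 * K ^+ 2).
have n10 : 0 < n1 by rewrite sqrtr_gt0; have := sqr_ge0 sg; lra.
have n20 : 0 < n2.
  rewrite sqrtr_gt0; have : 0 <= sg ^+ 2 * K ^+ 2 by rewrite mulr_ge0 ?sqr_ge0.
  lra.
have e4 := eps4K.
have kk : 0 < K^-1 - 4 * eps by rewrite subr_gt0 -div1r ltr_pdivlMr.
have cz0 : 0 < cmod z by exact: cmod_gt0.
exists (zeta sg K / z), (ax * n1 * n2 ^+ 2 * (K^-1 - 4 * eps)),
  (cmod z * (K * ax * n2 * (1 + s2 * eps))).
have se0 : 0 < 1 + s2 * eps by rewrite addr_gt0 // mulr_gt0.
split.
- by rewrite mulf_neq0 ?invr_eq0 // zeta_neq0.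
- by rewrite !mulr_gt0 // exprn_gt0.
- by rewrite !mulr_gt0.
- rewrite cmodM cmodV.
  have -> : cmod (zeta sg K) * (cmod z)^-1 * (cmod z * (K * ax * n2 * (1 + s2 * eps)))
      = cmod (zeta sg K) * (K * ax * n2 * (1 + s2 * eps)).
    by field; rewrite gt_eqF.
  have hz := zeta_norm sg0 k1; rewrite -/n1 -/n2 in hz.
  apply: (le_trans (y := rho * (2 * s2 * n1 * n2 * (K * ax * n2 * (1 + s2 * eps))))).
    apply: ler_wpM2l; first exact: ltW rho_gt0.
    by apply: ler_wpM2r => //; rewrite !mulr_ge0 // ?ltW.
  rewrite /rho le_eqVlt; apply/orP; left; apply/eqP.
  by field; rewrite !gt_eqF.
move=> l Sl.
have [ha1 ha2] := hax l Sl; have [hb1 hb2] := hsg l Sl.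
have hA := hclose Sl hx; have hB := hclose Sl hy.
rewrite (mulrC K sg) in hb2.
have := @point_est R sg K eps ax (l h0) (l (L x)) (l (L y)) _ _ sg0 k1 (ltW heps0) (ltW e4)
   (ltW ax0) (h0c.2 l Sl) ha1 ha2 hb1 hb2 hA hB.
rewrite -/n1 -/n2 /= => -[hR hI hC].
rewrite cextLC // mulrA divfK //; split => //.
rewrite cmodM; apply: (le_trans (ler_wpM2l (ltW cz0) hC)).
by rewrite le_eqVlt; apply/orP; left; apply/eqP; ring.
Qed.

Lemma disc p q c mu Mq : c != 0 -> 0 < mu -> 0 < Mq ->
  (forall l, S2 l -> mu * l h0 <= complex.Re (c * cext l p) /\
                    mu * l h0 <= complex.Im (c * cext l p)) ->
  (forall l, S2 l -> cmod (cext l q) <= Mq * l h0) ->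
  forall w, cmod w < mu / (cmod c * Mq) -> ccone S2 (cscale (- w) q + p).
Proof.
move=> c0 mu0 Mq0 hp hq w hw.
have cc0 : 0 < cmod c by exact: cmod_gt0.
have hw' : cmod c * cmod w * Mq < mu.
  by rewrite ltr_pdivlMr ?mulr_gt0 // in hw; rewrite (mulrC (cmod c)) -mulrA.
have key : forall l, S2 l ->
    (mu - cmod c * cmod w * Mq) * l h0 <= complex.Re (c * cext l (cscale (- w) q + p)) /\
    (mu - cmod c * cmod w * Mq) * l h0 <= complex.Im (c * cext l (cscale (- w) q + p)).
  move=> l Sl; have hl := hS2 Sl; have f0 := h0c.2 l Sl.
  have [hR hI] := hp l Sl.
  have hb : cmod (c * (- w * cext l q)) <= cmod c * cmod w * Mq * l h0.
    rewrite !cmodM cmodN mulrA -[X in _ <= X]mulrA.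
    by apply: ler_wpM2l; [rewrite mulr_ge0 ?cmod_ge0 | exact: hq].
  rewrite (cext_lin hl) mulrDr ReD ImD mulrBl; split.
    rewrite addrC; apply: lerD => //; apply: le_trans (Re_ge_ncmod _); by rewrite lerN2.
  rewrite addrC; apply: lerD => //; apply: le_trans (Im_ge_ncmod _); by rewrite lerN2.
apply: (quarter_cone hS2 c0).
  move=> l Sl; have [k1 k2] := key l Sl; have f0 := h0c.2 l Sl.
  have m0 : 0 <= (mu - cmod c * cmod w * Mq) * l h0 by rewrite mulr_ge0 // subr_ge0 ltW.
  by split; [exact: le_trans k1 | exact: le_trans k2].
have [l0 [Sl0 pos]] := l0_ex.
exists l0; split => //; apply/eqP => h.
have [k1 _] := key l0 Sl0; move: k1; rewrite h mulr0 /=.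
have : 0 < (mu - cmod c * cmod w * Mq) * l0 h0 by rewrite mulr_gt0 // subr_gt0.
by move=> a b; have := lt_le_trans a b; rewrite ltxx.
Qed.

Lemma dual_m2 : ccone_dual S2 (cext m2).
Proof.
have hm2 : Sstar S2 m2 := hset2.2.2.2.2.2.1.
have hmf := hm2.1.
have hmk : forall h, rcone S2 h -> kappa * `|h| <= m2 h := hset2.2.2.2.2.2.2.2.
split.
  split; first by move=> z p q; exact: (cext_lin hmf).
  split.
    move=> p; apply: (@continuous_comp _ _ _ fst (m2 : B2 -> R^o)); last exact: hmf.2.
    exact: cvg_fst.
  move=> p; apply: (@continuous_comp _ _ _ snd (m2 : B2 -> R^o)); last exact: hmf.2.
  exact: cvg_snd.
move=> h [z [x [y [z0 [[x0 hx] [[y0 hy] ->]]]]]].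
rewrite (cext_cscale hmf) mulf_neq0 // eq_complex /= negb_and; apply/orP; left.
have k0 : 0 < kappa by case/andP: hkappa.
have := hmk x (conj x0 hx).
have : 0 < kappa * `|x| by rewrite mulr_gt0 // normr_gt0.
move=> a b; rewrite gt_eqF //; exact: lt_le_trans a b.
Qed.

Lemma cscale0 (q : B2 * B2) : cscale 0 q = 0.
Proof. by case: q => a b; rewrite /Defs.cscale /= !scale0r subr0 addr0. Qed.

Lemma cone_part u : ccone S1 u -> ccone S2 (LC u).
Proof.
move=> Cu; have [c [mu [M [c0 mu0 M0 hr hl]]]] := PP Cu.
have := @disc (LC u) (LC u) c mu M c0 mu0 M0 _ _ 0.
rewrite oppr0 cscale0 add0r; apply.
- by move=> l Sl; have [] := hl l Sl.
- by move=> l Sl; have [] := hl l Sl.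
- rewrite /cmod /= expr0n /= addr0 sqrtr0 divr_gt0 // mulr_gt0 //.
  exact: cmod_gt0.
Qed.

Lemma lnM' (x y : R) : 0 < x -> 0 < y -> ln (x * y) = ln x + ln y.
Proof. by move=> hx hy; apply: lnM; rewrite posrE. Qed.

Lemma ln_target : forall X : R, X = 3 * s2 * kappa ^- 2 * K ^+ 4 ->
  ln (X ^+ 2) = 8 * D + 2 * ln (3 * s2 * kappa ^- 2).
Proof.
move=> X ->.
have k0 : 0 < kappa by case/andP: hkappa.
have s20 : 0 < s2 by rewrite sqrtr_gt0 ltr0n.
have a0 : 0 < 3 * s2 * kappa ^- 2 by rewrite !mulr_gt0 // ?ltr0n // invr_gt0 exprn_gt0.
have K0 : 0 < K by exact: expR_gt0.
set a := 3 * s2 * kappa ^- 2.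
have -> : (a * K ^+ 4) ^+ 2 = expR (8 * D + 2 * ln a).
  rewrite expRD !expRM_natl lnK ?posrE // -/K exprMn -exprM mulrC.
  by congr (_ * _).
exact: expRK.
Qed.

Lemma delta_part p q : (LC @` ccone S1) p -> (LC @` ccone S1) q ->
  (deltaC S2 p q <= (8 * D + 2 * ln (3 * s2 * kappa ^- 2))%:E)%E.
Proof.
case=> u Cu <-; case=> v Cv <-.
have [c [mu [M [c0 mu0 M0 hr hl]]]] := PP Cu.
have [c' [mu' [M' [c0' mu0' M0' hr' hl']]]] := PP Cv.
have cc : 0 < cmod c by exact: cmod_gt0.
have cc' : 0 < cmod c' by exact: cmod_gt0.
set r1 := mu / (cmod c * M'); set r2 := mu' / (cmod c' * M).
have r10 : 0 < r1 by rewrite divr_gt0 // mulr_gt0.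
have r20 : 0 < r2 by rewrite divr_gt0 // mulr_gt0.
have H1 := @disc (LC u) (LC v) c mu M' c0 mu0 M0'
   (fun l Sl => let: And3 a b _ := hl l Sl in conj a b)
   (fun l Sl => let: And3 _ _ d := hl' l Sl in d).
have H2 := @disc (LC v) (LC u) c' mu' M c0' mu0' M0
   (fun l Sl => let: And3 a b _ := hl' l Sl in conj a b)
   (fun l Sl => let: And3 _ _ d := hl l Sl in d).
apply: (le_trans (deltaC_le r10 r20 (cone_part Cu) (cone_part Cv) dual_m2 H1 H2)).
rewrite lee_fin.
have rp := rho_gt0.
have hrr : rho * rho <= r1 * r2.
  have -> : r1 * r2 = (mu / (cmod c * M)) * (mu' / (cmod c' * M')).
    by rewrite /r1 /r2; field; rewrite !gt_eqF.
  apply: ler_pM; try exact: ltW.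
    by rewrite ler_pdivlMr ?mulr_gt0.
  by rewrite ler_pdivlMr ?mulr_gt0.
set X := 3 * s2 * kappa ^- 2 * K ^+ 4.
rewrite -(ln_target (erefl X)).
have k0 : 0 < kappa by case/andP: hkappa.
have s20 : 0 < s2 by rewrite sqrtr_gt0 ltr0n.
have K0 : 0 < K by exact: expR_gt0.
have X0 : 0 < X by rewrite /X !mulr_gt0 // ?ltr0n // ?invr_gt0 exprn_gt0.
have q0 : 0 < r1 * r2 by exact: mulr_gt0.
rewrite ler_ln ?posrE ?invr_gt0 ?exprn_gt0 //.
apply: (le_trans (y := (rho * rho)^-1)).
  have q1 : 0 < r1 * r2 by exact: mulr_gt0.
  have q2 : 0 < rho * rho by exact: mulr_gt0.
  by rewrite lef_pV2 ?posrE.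
rewrite invfM.
have hri := rho_inv.
have hX : 3 * s2 * K ^+ 2 <= X.
  have -> : X = (3 * s2 * K ^+ 2) * (kappa ^- 2 * K ^+ 2).
    by rewrite /X; ring.
  rewrite -[X in X <= _]mulr1; apply: ler_wpM2l.
    by rewrite !mulr_ge0 ?ler0n ?sqr_ge0 // ltW.
  have kk : 1 <= kappa ^- 2.
    rewrite invf_ge1 ?exprn_gt0 //; case/andP: hkappa => _ k1.
    by rewrite expr_le1 // ltW.
  have kK : 1 <= K ^+ 2 by rewrite expr_ge1 // ?K1 // ltW.
  exact: mulr_ege1.
have ri0 : 0 <= rho^-1 by rewrite invr_ge0 ltW.
rewrite expr2; apply: ler_pM => //.
  by apply: le_trans hri hX.
by apply: le_trans hri hX.
Qed.

Lemma main_result : (forall p, ccone S1 p -> ccone S2 (LC p)) /\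
  (diam (deltaC S2) (LC @` ccone S1) <=
     (8 * fine (diam (dH S2) (L @` rcone S1))
      + 2 * ln (3 * Num.sqrt 2 * kappa ^- 2)
      + Num.sqrt 2 / 3 * kappa ^+ 2
          * expR (- 2 * fine (diam (dH S2) (L @` rcone S1))))%:E)%E.
Proof.
split; first exact: cone_part.
apply: ge_ereal_sup => x [p [q [ip [iq ->]]]].
apply: (le_trans (delta_part ip iq)); rewrite lee_fin -/D lerDl.
rewrite !mulr_ge0 ?expR_ge0 ?sqr_ge0 //.
all: by case/andP: hkappa => k0 _; exact: ltW.
Qed.

End Main.

Unset Implicit Arguments.

Theorem theorem5p17 (R : realType) (B1 B2 : completeNormedModType R)
  (S1 : set (B1 -> R)) (S2 : set (B2 -> R)) (e1 : B1) (e2 : B2)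
  (m1 : B1 -> R) (m2 : B2 -> R) (kappa : R)
  (hkappa : 0 < kappa < 1)
  (hset1 : cone_setting S1 e1 m1 kappa) (hset2 : cone_setting S2 e2 m2 kappa)
  (L : B1 -> B2) (LC : B1 * B1 -> B2 * B2)
  (hL : is_rop L) (hLC : is_cop LC)
  (hLcone : forall h, rcone S1 h -> rcone S2 (L h))
  (hDelta : (diam (dH S2) (L @` rcone S1) < +oo)%E)
  (eps : R) (heps0 : 0 < eps)
  (heps1 : eps < kappa ^+ 2 / (12 * Num.sqrt 2)
                 * expR (- 2 * fine (diam (dH S2) (L @` rcone S1))))
  (hclose : forall l h, S2 l -> rcone S1 h ->
     cmod (cext l (LC (h, 0)) - ((l (L h))%:C)%C) <= eps * l (L h)) :
  (forall p, ccone S1 p -> ccone S2 (LC p)) /\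
  (diam (deltaC S2) (LC @` ccone S1) <=
     (8 * fine (diam (dH S2) (L @` rcone S1))
      + 2 * ln (3 * Num.sqrt 2 * kappa ^- 2)
      + Num.sqrt 2 / 3 * kappa ^+ 2
          * expR (- 2 * fine (diam (dH S2) (L @` rcone S1))))%:E)%E.
Proof.
exact: (main_result hkappa hset1 hset2 hLC hLcone hDelta heps0 heps1 hclose).
Qed.
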